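(* Let $\mathcal J_1=(J_1,R_1,\sigma_1)$ and $\mathcal J_2=(J_2,R_2,\sigma_2)$ form a generalized Kähler structure on a real $4$-dimensional Lie algebra $\mathfrak g$, and assume neither $\mathcal J_1$ nor $\mathcal J_2$ is of type $2$. Then either $\mathcal J_1$ and $\mathcal J_2$ are both of type $0$, or both are of type $1$; in the latter case $\operatorname{Im}R_1\cap\operatorname{Im}R_2=\{0\}$.
   Context: Let $\mathfrak g$ be a real finite-dimensional Lie algebra, $\Phi(\mathfrak g)=\mathfrak g\oplus\mathfrak g^*$ with the neutral pairing $\langle u+\alpha,v+\beta\rangle=\tfrac12(\alpha(v)+\beta(u))$ and the bracket $[u+\alpha,v+\beta]=[u,v]+\mathrm{ad}_u^t\beta-\mathrm{ad}_v^t\alpha$, where $(\mathrm{ad}_u^t\alpha)(v)=-\alpha([u,v])$. A generalized complex structure on $\mathfrak g$ is an endomorphism $K$ of $\Phi(\mathfrak g)$ with $K^2=-\mathrm{Id}$, $\langle Ka,b\rangle+\langle a,Kb\rangle=0$ for all $a,b$, and vanishing Nijenhuis torsion $N_K(a,b)=[Ka,Kb]-K[Ka,b]-K[a,Kb]+K^2[a,b]$; it is written $K=\begin{pmatrix}J&R\\ \sigma&-J^*\end{pmatrix}$ and denoted $(J,R,\sigma)$. Its type is $\tfrac12\dim(\operatorname{Im}R)^0$; in dimension 4 type 0 means $R$ invertible, type 1 means $\operatorname{rank}R=2$, type 2 means $R=0$. A generalized Kähler structure on $\mathfrak g$ is a pair of commuting generalized complex structures $\mathcal J_1,\mathcal J_2$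 such that the symmetric form $G(u,v)=\langle\mathcal J_1\mathcal J_2u,v\rangle$ on $\Phi(\mathfrak g)$ is positive definite. *)

(* Defs.v *)
(* A real 4-dimensional Lie algebra is modelled on 'rV[R]_4
   (R : realType = the reals), elements of g* are row vectors in the dual
   basis, Phi(g) = g (+) g* is 'rV_(4+4) = row_mx u alpha, and endomorphisms of
   Phi(g) are matrices acting on the right: x |-> x *m K.
   With K = block_mx A B C D we get
     (row_mx u alpha) *m K = row_mx (u *m A + alpha *m C) (u *m B + alpha *m D),
   so J = A (ulsubmx K), R = C (dlsubmx K : g* -> g), sigma = B, -J^* = D. *)
From HB Require Import structures.
From mathcomp Require Import all_boot all_order all_algebra.
From mathcomp Require Import reals.
Set Implicit Arguments. Unset Strict Implicit. Unset Printing Implicit Defensive.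
Import Order.TTheory GRing.Theory Num.Theory.
Local Open Scope ring_scope.

Section Defs.
Variable R : realType.
Local Notation g := 'rV[R]_4.
Local Notation Phi := 'rV[R]_(4 + 4).

Definition lie_bracket (br : g -> g -> g) : Prop :=
  [/\ forall (a : R) (u v w : g), br (a *: u + v) w = a *: br u w + br v w,
      forall u : g, br u u = 0 &
      forall u v w : g, br u (br v w) + br v (br w u) + br w (br u v) = 0].

Definition evalf (alpha v : g) : R := \sum_(i < 4) alpha 0 i * v 0 i.

Definition adt (br : g -> g -> g) (u alpha : g) : g :=
  \row_(j < 4) - evalf alpha (br u (delta_mx 0 j)).

Definition npair (x y : Phi) : R :=
  2^-1 * (evalf (rsubmx x) (lsubmx y) + evalf (rsubmx y) (lsubmx x)).

Definition cbr (br : g -> g -> g) (x y : Phi) : Phi :=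
  row_mx (br (lsubmx x) (lsubmx y))
         (adt br (lsubmx x) (rsubmx y) - adt br (lsubmx y) (rsubmx x)).

Definition app (K : 'M[R]_(4 + 4)) (x : Phi) : Phi := x *m K.

Definition nijenhuis (br : g -> g -> g) (K : 'M[R]_(4 + 4)) (a b : Phi) : Phi :=
  cbr br (app K a) (app K b) - app K (cbr br (app K a) b)
  - app K (cbr br a (app K b)) + app K (app K (cbr br a b)).

Definition gen_complex (br : g -> g -> g) (K : 'M[R]_(4 + 4)) : Prop :=
  [/\ K *m K = - 1%:M,
      forall a b : Phi, npair (app K a) b + npair a (app K b) = 0 &
      forall a b : Phi, nijenhuis br K a b = 0].

Definition Rblock (K : 'M[R]_(4 + 4)) : 'M[R]_4 := dlsubmx K.

(* type = 1/2 dim (Im R)^0, where (Im R)^0 = { alpha in g* | alpha(Im R) = 0 }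
   = row kernel of R^T *)
Definition gc_type (K : 'M[R]_(4 + 4)) : nat := (\rank (kermx (Rblock K)^T))./2.

Definition gen_kahler (br : g -> g -> g) (K1 K2 : 'M[R]_(4 + 4)) : Prop :=
  [/\ gen_complex br K1, gen_complex br K2, K1 *m K2 = K2 *m K1 &
      forall x : Phi, x != 0 -> 0 < npair (app K1 (app K2 x)) x].

End Defs.

(* Main.v *)
Require Import Defs.
From HB Require Import structures.
From mathcomp Require Import all_boot all_order all_algebra.
From mathcomp Require Import reals.
From mathcomp Require Import ring lra zify.
Set Implicit Arguments. Unset Strict Implicit. Unset Printing Implicit Defensive.
Import Order.TTheory GRing.Theory Num.Theory.
Local Open Scope ring_scope.


Section Blocks.
Variable R : realFieldType.
Definition Lv : 'M[R]_(4, 4+4) := row_mx 1%:M 0.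
Definition Lw : 'M[R]_(4, 4+4) := row_mx 0 1%:M.
Definition Rv : 'M[R]_(4+4, 4) := col_mx 1%:M 0.
Definition Rw : 'M[R]_(4+4, 4) := col_mx 0 1%:M.

Lemma LvRv : Lv *m Rv = 1%:M. Proof. by rewrite mul_row_col mulmx1 mulmx0 addr0. Qed.
Lemma LvRw : Lv *m Rw = 0. Proof. by rewrite mul_row_col mulmx1 mulmx0 addr0. Qed.
Lemma LwRv : Lw *m Rv = 0. Proof. by rewrite mul_row_col mulmx1 mulmx0 addr0. Qed.
Lemma LwRw : Lw *m Rw = 1%:M. Proof. by rewrite mul_row_col mulmx1 mul0mx add0r. Qed.
Lemma RL1 : Rv *m Lv + Rw *m Lw = 1%:M.
Proof.
rewrite !mul_col_row !mulmx1 !mul0mx !mulmx0 add_block_mx !addr0 !add0r.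
by rewrite -scalar_mx_block.
Qed.
Lemma trLw : Lw^T = Rw. Proof. by rewrite /Lw tr_row_mx trmx0 trmx1. Qed.
Lemma trLv : Lv^T = Rv. Proof. by rewrite /Lv tr_row_mx trmx0 trmx1. Qed.
Lemma trRw : Rw^T = Lw. Proof. by rewrite -trLw trmxK. Qed.
Lemma trRv : Rv^T = Lv. Proof. by rewrite -trLv trmxK. Qed.

Lemma lsubE (x : 'rV[R]_(4+4)) : lsubmx x = x *m Rv.
Proof. by rewrite -{2}(hsubmxK x) mul_row_col mulmx1 mulmx0 addr0. Qed.
Lemma rsubE (x : 'rV[R]_(4+4)) : rsubmx x = x *m Rw.
Proof. by rewrite -{2}(hsubmxK x) mul_row_col mulmx1 mulmx0 add0r. Qed.
Lemma dlsubE (K : 'M[R]_(4+4)) : dlsubmx K = Lw *m K *m Rv.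
Proof.
by rewrite -{2}(submxK K) /Lw mul_row_block !mul0mx !mul1mx !add0r mul_row_col mulmx1 mulmx0 addr0.
Qed.

Lemma blkM m p (L : 'M[R]_(m, 4+4)) (Rr : 'M[R]_(4+4, p)) (M N : 'M[R]_(4+4)) :
  L *m (M *m N) *m Rr = (L *m M *m Rv) *m (Lv *m N *m Rr) + (L *m M *m Rw) *m (Lw *m N *m Rr).
Proof.
have -> : M *m N = M *m (Rv *m Lv + Rw *m Lw) *m N by rewrite RL1 mulmx1.
by rewrite mulmxDr mulmxDl mulmxDr mulmxDl !mulmxA.
Qed.
End Blocks.
Arguments Lv {R}. Arguments Lw {R}. Arguments Rv {R}. Arguments Rw {R}.


Section Key.
Variable R : realFieldType.

Lemma dbl m n (A B : 'M[R]_(m, n)) : A + A = B + B -> A = B.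
Proof.
move=> h; apply: (@scalerI _ _ (2%:R : R)); first by rewrite pnatr_eq0.
by rewrite !scaler_nat !mulr2n.
Qed.

Lemma keyid (K1 K2 : 'M[R]_(4+4)) :
  K1 *m K1 = - 1%:M -> K2 *m K2 = -1%:M -> K1 *m K2 = K2 *m K1 ->
  Lw *m (K1 *m K2) *m Rv \in unitmx ->
  (Lw *m (K1 - K2) *m Rv) *m invmx (Lw *m (K1 *m K2) *m Rv) *m (Lw *m (K1 - K2) *m Rv)
   = - (Lw *m (K1 *m K2) *m Rv).
Proof.
move=> h1 h2 hc.
set P := K1 *m K2; set E := K1 - K2.
have e1 : K1 *m K2 *m K1 = - K2 by rewrite -mulmxA -hc mulmxA h1 mulNmx mul1mx.
have e2 : K1 *m K2 *m K2 = - K1 by rewrite -mulmxA h2 mulmxN mulmx1.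
have e3 : K1 *m K1 *m K2 = - K2 by rewrite h1 mulNmx mul1mx.
have e4 : K2 *m K1 *m K2 = - K1 by rewrite -hc e2.
have hPE : P *m E = E by rewrite /P /E mulmxBr e1 e2 opprK addrC.
have hEP : E *m P = E by rewrite /P /E mulmxBl !mulmxA e3 e4 opprK addrC.
have hEE : E *m E = - (1%:M + P) - (1%:M + P).
  rewrite /E /P mulmxBl !mulmxBr h1 h2 -hc; by rewrite !opprD !opprK [- (K1 *m K2) - _]addrC.
have hPP : P *m P = 1%:M by rewrite /P mulmxA e1 mulNmx h2 opprK.
set G := Lw *m P *m Rv => hG.
set X := Lw *m E *m Rv.
set Gi := invmx G.
have hGi : Gi *m G = 1%:M by apply: mulVmx.
have hGGi : G *m Gi = 1%:M by apply: mulmxV.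
have i1 := blkM Lw Rv P E; rewrite hPE -/X -/G in i1.
have i2 := blkM Lw Rv E P; rewrite hEP -/X -/G in i2.
have i3 := blkM Lw Rv E E; rewrite hEE -/X in i3.
have i4 := blkM Lw Rv P P; rewrite hPP -/G mulmx1 LwRv in i4.
have i3' : Lw *m (- (1%:M + P) - (1%:M + P)) *m Rv = - G - G.
  by rewrite mulmxBr mulmxBl !mulmxN !mulNmx !mulmxDr !mulmxDl mulmx1 LwRv !add0r.
rewrite i3' in i3.
set E11 := Lv *m E *m Rv in i1 i3.
set E22 := Lw *m E *m Rw in i2 i3.
set P11 := Lv *m P *m Rv in i2 i4.
set P22 := Lw *m P *m Rw in i1 i4.
have hE11 : E11 = Gi *m (X - P22 *m X).
  by rewrite {1}i1 addrK mulmxA hGi mul1mx.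
have hE22 : E22 = (X - X *m P11) *m Gi.
  by rewrite {1}i2 [X *m P11 + _]addrC addrK -mulmxA hGGi mulmx1.
have hGP : Gi *m P22 = - P11 *m Gi.
  have : P22 *m G = - (G *m P11) by apply/eqP; rewrite -addr_eq0 addrC -i4.
  move=> h; rewrite -[Gi *m P22]mulmx1 -hGGi mulmxA -(mulmxA Gi P22 G) h mulmxN (mulmxA Gi G P11) hGi mul1mx.
  by rewrite mulNmx.
clearbody E11 E22 P11 P22 X Gi G E P.
apply: dbl.
rewrite i3 hE11 hE22 mulmxBr mulmxBr !mulmxBl !mulmxA.
rewrite -(mulmxA X Gi P22) hGP !mulNmx mulmxN !mulNmx opprK !mulmxA.
by rewrite addrACA subrr addr0.
Qed.
End Key.


Section Core.
Variable R : realFieldType.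
Implicit Types (G C : 'M[R]_4) (v w x y : 'rV[R]_4).

Definition gf G v w : R := (v *m G *m w^T) 0 0.

Lemma tr11 (A : 'M[R]_1) : A^T 0 0 = A 0 0.
Proof. by rewrite mxE. Qed.
Lemma opp11 (A : 'M[R]_1) : (- A) 0 0 = - A 0 0.
Proof. by rewrite mxE. Qed.

Lemma gf_sym G v w : G^T = G -> gf G v w = gf G w v.
Proof.
move=> hG; rewrite /gf.
transitivity ((v *m G *m w^T)^T 0 0); first by rewrite tr11.
by rewrite !trmx_mul trmxK hG mulmxA.
Qed.

Lemma gf_linl G a b x y z : gf G (a *: x + b *: y) z = a * gf G x z + b * gf G y z.
Proof. by rewrite /gf !mulmxDl -!scalemxAl !mxE. Qed.

Lemma gf_linr G a b x y z : gf G z (a *: x + b *: y) = a * gf G z x + b * gf G z y.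
Proof. by rewrite /gf linearD !linearZ /= !mulmxDr -!scalemxAr !mxE. Qed.

Lemma gf0l G z : gf G 0 z = 0.
Proof. by rewrite /gf !mul0mx mxE. Qed.
Lemma gf0r G z : gf G z 0 = 0.
Proof. by rewrite /gf trmx0 mulmx0 mxE. Qed.

Lemma gf_skew G C x y : G^T = G -> C^T = - C -> G \in unitmx ->
  gf G (x *m (C *m invmx G)) y = - gf G x (y *m (C *m invmx G)).
Proof.
move=> hG hC hu; rewrite /gf.
have -> : x *m (C *m invmx G) *m G = x *m C.
  by rewrite mulmxA -(mulmxA _ (invmx G)) mulVmx // mulmx1.
rewrite !trmx_mul trmx_inv hG hC !mulmxA -(mulmxA x G) mulmxV // mulmx1.
by rewrite mulmxN mulNmx !opp11 opprK.
Qed.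

Lemma gf_self G C x : G^T = G -> C^T = - C -> G \in unitmx ->
  gf G (x *m (C *m invmx G)) x = 0.
Proof.
move=> hG hC hu; have h := gf_skew x x hG hC hu.
rewrite (gf_sym _ _ hG) in h.
have : 2%:R * gf G x (x *m (C *m invmx G)) = 0 by rewrite mulr2n mulrDl mul1r {1}h addNr.
rewrite (gf_sym _ _ hG) => /eqP; rewrite mulf_eq0 pnatr_eq0 /= => /eqP //.
Qed.

Lemma indep G v w : G^T = G -> (forall u : 'rV_4, u != 0 -> 0 < gf G u u) ->
  v != 0 -> w != 0 -> gf G v w = 0 -> \rank (col_mx v w) = 2%N.
Proof.
move=> hG hpd nv nw hvw; apply/eqP; change (row_free (col_mx v w)).
rewrite -kermx_eq0; apply/rowV0P => u /sub_kermxP.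
rewrite -[u]hsubmxK mul_row_col (mx11_scalar (lsubmx u)) (mx11_scalar (rsubmx u)).
rewrite !mul_scalar_mx.
set a := lsubmx u 0 0; set b := rsubmx u 0 0 => h.
have ha : a = 0.
  have := congr1 (fun t => gf G t v) h; rewrite gf_linl gf0l (gf_sym _ _ hG) hvw mulr0 addr0.
  by move/eqP; rewrite mulf_eq0 (gt_eqF (hpd _ nv)) orbF => /eqP.
rewrite ha scale0r add0r in h.
have hb : b = 0 by move/eqP: h; rewrite scalemx_eq0 (negbTE nw) orbF => /eqP.
by rewrite ha hb !raddf0 row_mx0.
Qed.

Lemma partA C1 C2 G : C1^T = -C1 -> C2^T = -C2 -> G^T = G ->
  (forall u, u != 0 -> 0 < gf G u u) -> G \in unitmx ->
  C1 *m invmx G *m C1 + C2 *m invmx G *m C2 = - G ->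
  C1 *m invmx G *m C2 + C2 *m invmx G *m C1 = 0 ->
  (0 < \rank C2)%N -> \rank C2 = 2%N \/ \rank C2 = 4%N.
Proof.
move=> h1 h2 hG hpd hu hU hV r2.
have F1 : (C1 *m invmx G) *m (C1 *m invmx G) + (C2 *m invmx G) *m (C2 *m invmx G) = - 1%:M.
  by rewrite !mulmxA -mulmxDl hU mulNmx mulmxV.
have hV' : C1 *m invmx G *m C2 = - (C2 *m invmx G *m C1).
  by apply/eqP; rewrite -addr_eq0 hV.
have rankS2 : \rank (C2 *m invmx G) = \rank C2.
  by rewrite mxrankMfree // row_free_unit unitmx_inv.
have lo : (2 <= \rank C2)%N.
  have : C2 *m invmx G != 0 by rewrite -mxrank_eq0 rankS2 -lt0n.
  case/rowV0Pn => v /submxP [D hD] nv.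
  set w := v *m (C2 *m invmx G).
  have nw : w != 0.
    apply/negP => /eqP hw0.
    have : gf G v v = 0 by rewrite {1}hD gf_skew // -/w hw0 gf0r oppr0.
    by move/eqP; rewrite (gt_eqF (hpd _ nv)).
  have hvw : gf G v w = 0 by rewrite (gf_sym _ _ hG) gf_self.
  have := indep hG hpd nv nw hvw.
  have sub : (col_mx v w <= C2 *m invmx G)%MS by rewrite col_mx_sub submxMl hD submxMl.
  by move=> hr; have := mxrankS sub; rewrite hr rankS2.
have hi : (\rank C2 < 4)%N -> (\rank C2 <= 2)%N.
  move=> lt4.
  have : kermx C2 != 0 by rewrite -mxrank_eq0 mxrank_ker subn_eq0 -ltnNge.
  case/rowV0Pn => a /sub_kermxP ha na.
  set b := a *m (C1 *m invmx G).
  have hb2 : b *m C2 = 0.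
    have -> : b *m C2 = a *m (C1 *m invmx G *m C2) by rewrite /b !mulmxA.
    by rewrite hV' mulmxN !mulmxA ha !mul0mx oppr0.
  have hbb : b *m (C1 *m invmx G) = - a.
    rewrite /b -mulmxA -(addrK ((C2 *m invmx G) *m (C2 *m invmx G)) ((C1 *m invmx G) *m (C1 *m invmx G))) F1.
    by rewrite mulmxBr mulmxN mulmx1 !mulmxA ha !mul0mx subr0.
  have nb : b != 0.
    apply/negP => /eqP hb0; move: hbb; rewrite hb0 mul0mx => /eqP.
    by rewrite eq_sym oppr_eq0 (negbTE na).
  have hab : gf G a b = 0 by rewrite (gf_sym _ _ hG) gf_self.
  have := indep hG hpd na nb hab.
  have sub : (col_mx a b <= kermx C2)%MS.
    by rewrite col_mx_sub; apply/andP; split; apply/sub_kermxP.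
  move=> h; have := mxrankS sub; rewrite h mxrank_ker; lia.
have := rank_leq_col C2.
case: (ltnP (\rank C2) 4) => [/hi|] ; lia.
Qed.

Lemma gfNr G z y : gf G z (- y) = - gf G z y.
Proof. by rewrite /gf linearN /= mulmxN opp11. Qed.

Lemma kerS C G v : G \in unitmx -> v *m (C *m invmx G) = 0 -> v *m C = 0.
Proof.
move=> hu h; rewrite -[C]mulmx1 -(mulVmx hu) !mulmxA.
by rewrite -(mulmxA v C) h mul0mx.
Qed.

Lemma partC C1 C2 G : C1^T = -C1 -> C2^T = -C2 -> G^T = G ->
  (forall u, u != 0 -> 0 < gf G u u) -> G \in unitmx ->
  C1 *m invmx G *m C2 + C2 *m invmx G *m C1 = 0 ->
  \rank C2 = 2%N -> (\rank C1 < 4)%N.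
Proof.
move=> h1 h2 hG hpd hu hV hr2.
have F2 : (C2 *m invmx G) *m (C1 *m invmx G) = - ((C1 *m invmx G) *m (C2 *m invmx G)).
  have : (C1 *m invmx G *m C2 + C2 *m invmx G *m C1) *m invmx G = 0 by rewrite hV mul0mx.
  rewrite mulmxDl addrC => /eqP; rewrite addr_eq0 => /eqP.
  by rewrite !mulmxA.
have rankS2 : \rank (C2 *m invmx G) = \rank C2.
  by rewrite mxrankMfree // row_free_unit unitmx_inv.
have : C2 *m invmx G != 0 by rewrite -mxrank_eq0 rankS2 hr2.
case/rowV0Pn => v /submxP [D hD] nv.
set w := v *m (C2 *m invmx G).
have nw : w != 0.
  apply/negP => /eqP hw0.
  have : gf G v v = 0 by rewrite {1}hD gf_skew // -/w hw0 gf0r oppr0.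
  by move/eqP; rewrite (gt_eqF (hpd _ nv)).
have hvw : gf G v w = 0 by rewrite (gf_sym _ _ hG) gf_self.
have hrk := indep hG hpd nv nw hvw.
have sub : (col_mx v w <= C2 *m invmx G)%MS by rewrite col_mx_sub submxMl hD submxMl.
have sup : (C2 *m invmx G <= col_mx v w)%MS.
  by rewrite -(mxrank_leqif_sup sub).2 hrk rankS2 hr2.
set x := v *m (C1 *m invmx G).
have hxS : (x <= C2 *m invmx G)%MS.
  rewrite /x hD -mulmxA F2 mulmxN -mulNmx (mulmxA (- D) (C1 *m invmx G)); exact: submxMl.
have : (x <= v + w)%MS by rewrite addsmxE; exact: submx_trans sup.
case/sub_addsmxP => u hx.
rewrite (mx11_scalar u.1) (mx11_scalar u.2) !mul_scalar_mx in hx.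
set a := u.1 0 0 in hx; set b := u.2 0 0 in hx.
have hwS1 : w *m (C1 *m invmx G) = - (x *m (C2 *m invmx G)).
  by rewrite /w /x -mulmxA F2 mulmxN !mulmxA.
have hxw : gf G x w = - gf G x w.
  have hA : gf G x w = gf G v (x *m (C2 *m invmx G)).
    by rewrite /x gf_skew // hwS1 gfNr opprK.
  have := gf_skew v x hG h2 hu; rewrite -/w (gf_sym w x hG) => e.
  by rewrite {2}e -hA opprK.
have hxw0 : gf G x w = 0.
  have : 2%:R * gf G x w = 0 by rewrite mulr2n mulrDl mul1r {1}hxw addNr.
  by move/eqP; rewrite mulf_eq0 pnatr_eq0 /= => /eqP.
have hb : b = 0.
  move: hxw0; rewrite hx gf_linl hvw mulr0 add0r => /eqP.
  by rewrite mulf_eq0 (gt_eqF (hpd _ nw)) orbF => /eqP.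
have ha : a = 0.
  have := gf_self v hG h1 hu; rewrite -/x hx gf_linl hb mul0r addr0 => /eqP.
  by rewrite mulf_eq0 (gt_eqF (hpd _ nv)) orbF => /eqP.
have hx0 : v *m C1 = 0.
  apply: (kerS hu); rewrite -/x hx ha hb !scale0r addr0 //.
have : kermx C1 != 0.
  apply/rowV0Pn; exists v => //; exact/sub_kermxP.
rewrite -mxrank_eq0 mxrank_ker; lia.
Qed.

Lemma partD C1 C2 G : C1^T = -C1 -> C2^T = -C2 -> G \in unitmx ->
  C1 *m invmx G *m C1 + C2 *m invmx G *m C2 = - G ->
  \rank C1 = 2%N -> \rank C2 = 2%N -> (C1 :&: C2 == (0 : 'M[R]_4))%MS.
Proof.
move=> h1 h2 hu hU r1 r2.
have hrow : row_free (row_mx C1 C2).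
  rewrite -kermx_eq0; apply/rowV0P => u /sub_kermxP h.
  have [e1 e2] : u *m C1 = 0 /\ u *m C2 = 0.
    by apply/eq_row_mx; rewrite row_mx0 -mul_mx_row.
  have : u *m (C1 *m invmx G *m C1 + C2 *m invmx G *m C2) = 0.
    by rewrite mulmxDr !mulmxA e1 e2 !mul0mx addr0.
  rewrite hU mulmxN => /eqP; rewrite oppr_eq0 => /eqP hG0.
  by rewrite -[u]mulmx1 -(mulmxV hu) mulmxA hG0 mul0mx.
have rk : \rank (C1 + C2)%MS = 4%N.
  rewrite addsmxE -mxrank_tr tr_col_mx h1 h2 -opp_row_mx eqmx_opp.
  exact/eqP.
have := mxrank_sum_cap C1 C2; rewrite rk r1 r2 => h.
apply/andP; split; last exact: sub0mx.
by rewrite submx0 -mxrank_eq0; apply/eqP; lia.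
Qed.

End Core.


Section Glue.
Variable R : realType.

Definition Om : 'M[R]_(4+4) := Rv *m Lw + Rw *m Lv.

Lemma OmRw : Om *m Rw = Rv.
Proof. by rewrite /Om mulmxDl -!mulmxA LwRw LvRw mulmx1 mulmx0 addr0. Qed.
Lemma OmRv : Om *m Rv = Rw.
Proof. by rewrite /Om mulmxDl -!mulmxA LwRv LvRv mulmx1 mulmx0 add0r. Qed.
Lemma LwOm : Lw *m Om = Lv.
Proof. by rewrite /Om mulmxDr !mulmxA LwRv LwRw mul1mx mul0mx add0r. Qed.
Lemma LvOm : Lv *m Om = Lw.
Proof. by rewrite /Om mulmxDr !mulmxA LvRv LvRw mul1mx mul0mx addr0. Qed.
Lemma OmOm : Om *m Om = 1%:M.
Proof. by rewrite {1}/Om mulmxDl -!mulmxA LwOm LvOm RL1. Qed.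

Lemma evalfE (a v : 'rV[R]_4) : evalf a v = (a *m v^T) 0 0.
Proof. by rewrite /evalf mxE; apply: eq_bigr => i _; rewrite mxE. Qed.

Lemma add11 (A B : 'M[R]_1) : (A + B) 0 0 = A 0 0 + B 0 0.
Proof. by rewrite mxE. Qed.

Lemma npairE (x y : 'rV[R]_(4+4)) : npair x y = 2^-1 * (x *m Om *m y^T) 0 0.
Proof.
rewrite /npair !evalfE !lsubE !rsubE; congr (_ * _).
have e : x *m Om *m y^T = x *m Rv *m (y *m Rw)^T + x *m Rw *m (y *m Rv)^T.
  by rewrite /Om mulmxDr mulmxDl !trmx_mul trRw trRv !mulmxA.
rewrite e add11 addrC; congr (_ + _).
by rewrite -tr11 !trmx_mul !trmxK.
Qed.

Lemma delta_entry (M : 'M[R]_(4+4)) i j :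
  ((delta_mx 0 i : 'rV[R]_(4+4)) *m M *m (delta_mx 0 j : 'rV[R]_(4+4))^T) 0 0 = M i j.
Proof. by rewrite -rowE trmx_delta -colE !mxE. Qed.

Lemma skew_mx (K : 'M[R]_(4+4)) :
  (forall a b, npair (app K a) b + npair a (app K b) = 0) -> K *m Om + Om *m K^T = 0.
Proof.
move=> h; apply/matrixP => i j; rewrite [RHS]mxE -delta_entry.
have := h (delta_mx 0 i : 'rV[R]_(4+4)) (delta_mx 0 j : 'rV[R]_(4+4)); rewrite /app !npairE -mulrDr => /eqP.
rewrite mulf_eq0 invr_eq0 pnatr_eq0 /= => /eqP <-.
by rewrite mulmxDr mulmxDl trmx_mul !mulmxA mxE.
Qed.

Lemma C_skew (K : 'M[R]_(4+4)) : K *m Om + Om *m K^T = 0 -> (dlsubmx K)^T = - dlsubmx K.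
Proof.
move=> h; rewrite dlsubE.
have : Lw *m (K *m Om + Om *m K^T) *m Rw = 0 by rewrite h mulmx0 mul0mx.
rewrite mulmxDr mulmxDl mulmxA -(mulmxA (Lw *m K)) OmRw mulmxA LwOm.
have -> : Lv *m K^T *m Rw = (Lw *m K *m Rv)^T by rewrite !trmx_mul trRv trLw mulmxA.
by move/eqP; rewrite addrC addr_eq0 => /eqP.
Qed.

Lemma KT (K : 'M[R]_(4+4)) : K *m Om + Om *m K^T = 0 -> K^T = - (Om *m K *m Om).
Proof.
move=> h.
have e : Om *m K^T = - (K *m Om) by apply/eqP; rewrite -addr_eq0 addrC h.
by rewrite -[K^T]mul1mx -OmOm -mulmxA e mulmxN mulmxA.
Qed.

Lemma G_sym (K1 K2 : 'M[R]_(4+4)) : K1 *m Om + Om *m K1^T = 0 -> K2 *m Om + Om *m K2^T = 0 ->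
  K1 *m K2 = K2 *m K1 ->
  (Lw *m (K1 *m K2) *m Rv)^T = Lw *m (K1 *m K2) *m Rv.
Proof.
move=> h1 h2 hc.
rewrite !trmx_mul trRv trLw (KT h1) (KT h2) mulNmx mulmxN opprK !mulmxA.
rewrite -(mulmxA _ Om Om) OmOm mulmx1 -(mulmxA _ Om Rw) OmRw LvOm -(mulmxA Lw K2) -hc.
by rewrite !mulmxA.
Qed.

Lemma pd_G (K1 K2 : 'M[R]_(4+4)) :
  (forall x : 'rV_(4+4), x != 0 -> 0 < npair (app K1 (app K2 x)) x) -> K1 *m K2 = K2 *m K1 ->
  forall v, v != 0 -> 0 < gf (Lw *m (K1 *m K2) *m Rv) v v.
Proof.
move=> h hc v nv.
have nx : v *m Lw != 0.
  apply: contraNneq nv => e; by rewrite -[v]mulmx1 -LwRw mulmxA e mul0mx.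
have := h _ nx; rewrite /app npairE pmulr_rgt0 ?invr_gt0 ?ltr0n //.
by rewrite trmx_mul trLw mulmxA -(mulmxA _ Om Rw) OmRw /gf -(mulmxA _ K2 K1) -hc !mulmxA.
Qed.

Lemma pd_unit (G : 'M[R]_4) : (forall v, v != 0 -> 0 < gf G v v) -> G \in unitmx.
Proof.
move=> pd; rewrite -row_free_unit -kermx_eq0; apply/rowV0P => v /sub_kermxP hv.
apply/eqP; apply: contraT => nv; have := pd _ nv.
by rewrite /gf hv mul0mx mxE ltxx.
Qed.
End Glue.

Unset Implicit Arguments. Set Strict Implicit.


Lemma UVlem (R : realFieldType) m n (U V W : 'M[R]_(m,n)) : U + V = W -> U - V = W -> V = 0 /\ U = W.
Proof.
move=> hP hM.
have hV : V = 0.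
  apply: dbl; rewrite addr0.
  have : (U + V) - (U - V) = W - W by rewrite hP hM.
  by rewrite subrr opprB addrC addrA addrNK.
by split=> //; rewrite -hM hV subr0.
Qed.

Lemma expM (R : realFieldType) (A B Gi : 'M[R]_4) :
  (A - B) *m Gi *m (A - B) = A *m Gi *m A + B *m Gi *m B - (A *m Gi *m B + B *m Gi *m A).
Proof.
rewrite !mulmxBl !mulmxBr opprB opprD.
by rewrite addrACA.
Qed.

Lemma expP (R : realFieldType) (A B Gi : 'M[R]_4) :
  (A + B) *m Gi *m (A + B) = A *m Gi *m A + B *m Gi *m B + (A *m Gi *m B + B *m Gi *m A).
Proof.
rewrite !mulmxDl !mulmxDr [B *m Gi *m A + _]addrC.
by rewrite addrACA.
Qed.

Theorem proposition4p1 (R : realType) (br : 'rV[R]_4 -> 'rV[R]_4 -> 'rV[R]_4)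
    (K1 K2 : 'M[R]_(4 + 4)) :
  lie_bracket br -> gen_kahler br K1 K2 ->
  gc_type K1 <> 2%N -> gc_type K2 <> 2%N ->
  (gc_type K1 = 0%N /\ gc_type K2 = 0%N) \/
  [/\ gc_type K1 = 1%N, gc_type K2 = 1%N &
      (Rblock K1 :&: Rblock K2 == (0 : 'M[R]_4))%MS].
Proof.
move=> _ [[hK1 hs1 _] [hK2 hs2 _] hc hpd] t1 t2.
have Z1 := skew_mx hs1; have Z2 := skew_mx hs2.
rewrite /gc_type !mxrank_ker !mxrank_tr in t1 t2 *.
rewrite /Rblock in t1 t2 *.
have s1 := C_skew Z1; have s2 := C_skew Z2.
have hG := G_sym Z1 Z2 hc.
have pd := pd_G hpd hc.
have hu := pd_unit pd.
have e1 := keyid hK1 hK2 hc hu.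
have hK2' : (- K2) *m (- K2) = - 1%:M by rewrite mulmxN mulNmx opprK.
have hc' : K1 *m - K2 = - K2 *m K1 by rewrite mulmxN mulNmx hc.
have eG : Lw *m (K1 *m - K2) *m Rv = (-1) *: (Lw *m (K1 *m K2) *m Rv).
  by rewrite mulmxN mulmxN mulNmx scaleN1r.
have hu' : Lw *m (K1 *m - K2) *m Rv \in unitmx by rewrite eG unitmxZ // unitrN1.
have e2 := keyid hK1 hK2' hc' hu'.
rewrite eG invmxZ -?eG // invrN1 !scaleN1r opprK mulmxN mulNmx in e2.
move/oppr_inj: e2 => e2.
rewrite mulmxBr mulmxBl -(dlsubE K1) -(dlsubE K2) in e1.
rewrite mulmxDr mulmxDl -(dlsubE K1) -(dlsubE K2) in e2.
set C1 := dlsubmx K1 in s1 e1 e2 t1 t2 *.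
set C2 := dlsubmx K2 in s2 e1 e2 t1 t2 *.
set G := Lw *m (K1 *m K2) *m Rv in hG pd hu e1 e2.
rewrite expM in e1; rewrite expP eG scaleN1r in e2.
have [hV hU] := UVlem _ _ _ _ _ _ e2 e1.
have hU' : C2 *m invmx G *m C2 + C1 *m invmx G *m C1 = - G by rewrite addrC.
have hV' : C2 *m invmx G *m C1 + C1 *m invmx G *m C2 = 0 by rewrite addrC.
have r1 : (0 < \rank C1)%N by rewrite lt0n; apply/eqP => h0; apply: t1; rewrite h0.
have r2 : (0 < \rank C2)%N by rewrite lt0n; apply/eqP => h0; apply: t2; rewrite h0.
have [a1|a1] := partA s2 s1 hG pd hu hU' hV' r1;
have [a2|a2] := partA s1 s2 hG pd hu hU hV r2.
- by right; rewrite a1 a2; split => //; apply: (partD s1 s2 hu hU).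
- by have := partC s2 s1 hG pd hu hV' a1; rewrite a2.
- by have := partC s1 s2 hG pd hu hV a2; rewrite a1.
- by left; rewrite a1 a2.
Qed.
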